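(* Let $n\ge1$. Suppose that to each ordered orthonormal basis $(v_1,\dots,v_{n+1})$ of $\mathbb{R}^{n+1}$ there is assigned a number $\epsilon=\epsilon(v_1,\dots,v_{n+1})>0$, and let $B_{v_1,\dots,v_{n+1}}=A_{v_1,\dots,v_{n+1},\epsilon(v_1,\dots,v_{n+1})}$. Then there is a finite collection $B_1,\dots,B_N$ of such sets, each of the form $B_{v_1,\dots,v_{n+1}}$, such that $\{x\in\mathbb{R}^{n+1}:|x|\le1\}\subset\bigcup_{i=1}^NB_i$.
   Context: For mutually orthogonal unit vectors $v_1,\dots,v_{n+1}\in\mathbb{R}^{n+1}$ and $\epsilon>0$, $A_{v_1,\dots,v_{n+1},\epsilon}=\{c_1v_1+\dots+c_{n+1}v_{n+1}: |c_1|\le1,\ |c_{i+1}|\le\epsilon|c_i|\text{ for all }1\le i\le n\}$. *)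

(* Defs.v *)
From Stdlib Require Export Reals List.
Open Scope R_scope.

(* A vector of R^(n+1) is a function nat -> R; only coordinates 0..n matter. *)
Definition vec := nat -> R.

Definition dot (n : nat) (u v : vec) : R := sum_f_R0 (fun k => u k * v k) n.

Definition norm (n : nat) (x : vec) : R := sqrt (dot n x x).

(* An ordered basis (v_1,...,v_{n+1}) is represented by b : nat -> vec,
   with v_{i+1} = b i for i = 0..n. *)
Definition orthonormal (n : nat) (b : nat -> vec) : Prop :=
  forall i j : nat, (i <= n)%nat -> (j <= n)%nat ->
    dot n (b i) (b j) = if Nat.eqb i j then 1 else 0.

(* A_{v_1,...,v_{n+1},eps} = { c_1 v_1 + ... + c_{n+1} v_{n+1} :
     |c_1| <= 1, |c_{i+1}| <= eps |c_i| for 1 <= i <= n }  (0-indexed here). *)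
Definition A_set (n : nat) (b : nat -> vec) (eps : R) (x : vec) : Prop :=
  exists c : nat -> R,
    Rabs (c 0%nat) <= 1 /\
    (forall i : nat, (i < n)%nat -> Rabs (c (S i)) <= eps * Rabs (c i)) /\
    (forall k : nat, (k <= n)%nat -> x k = sum_f_R0 (fun i => c i * b i k) n).

(* Main.v *)
Require Import Defs.
From Stdlib Require Import Reals Lra Lia Psatz List Classical ClassicalEpsilon.
From Coquelicot Require Compactness.
Open Scope R_scope.


Definition kd (i j : nat) : R := if Nat.eqb i j then 1 else 0.
Lemma kd_eq i : kd i i = 1. Proof. unfold kd; rewrite Nat.eqb_refl; auto. Qed.
Lemma kd_neq i j : i <> j -> kd i j = 0.
Proof. intro H; unfold kd; apply Nat.eqb_neq in H; rewrite H; auto. Qed.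
Lemma kd_sym i j : kd i j = kd j i. Proof. unfold kd; rewrite Nat.eqb_sym; auto. Qed.

Lemma sum_zero f m : (forall i, (i <= m)%nat -> f i = 0) -> sum_f_R0 f m = 0.
Proof. induction m; simpl; intros H. apply H; lia. rewrite IHm by (intros; apply H; lia). rewrite H by lia. ring. Qed.

Lemma sum_scal_l a f m : sum_f_R0 (fun i => a * f i) m = a * sum_f_R0 f m.
Proof. induction m; simpl; [ring| rewrite IHm; ring]. Qed.

Lemma sum_swap (F : nat -> nat -> R) n m : sum_f_R0 (fun i => sum_f_R0 (fun j => F i j) m) n = sum_f_R0 (fun j => sum_f_R0 (fun i => F i j) n) m.
Proof. induction n; simpl. reflexivity. rewrite IHn, <- sum_plus. reflexivity. Qed.

Lemma kron_l f m i : (i <= m)%nat -> sum_f_R0 (fun k => kd i k * f k) m = f i.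
Proof.
  induction m; intro Hi; simpl.
  - assert (i = 0%nat) by lia; subst. rewrite kd_eq; ring.
  - destruct (Nat.eq_dec i (S m)).
    + subst. rewrite sum_zero. rewrite kd_eq; ring. intros k Hk. rewrite kd_neq by lia; ring.
    + rewrite IHm by lia. rewrite kd_neq by lia; ring.
Qed.

Lemma kron_r f m i : (i <= m)%nat -> sum_f_R0 (fun k => f k * kd k i) m = f i.
Proof. intro Hi. rewrite <- (kron_l f m i Hi). apply sum_eq; intros. rewrite kd_sym; ring. Qed.

Lemma sum_nonneg f m : (forall i, (i <= m)%nat -> 0 <= f i) -> 0 <= sum_f_R0 f m.
Proof. induction m; simpl; intros H. apply H; lia. pose proof (H (S m) (le_n _)). pose proof (IHm (fun i Hi => H i ltac:(lia))). lra. Qed.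

Lemma sum_term_le f m i : (forall j, (j <= m)%nat -> 0 <= f j) -> (i <= m)%nat -> f i <= sum_f_R0 f m.
Proof.
  induction m; intros H Hi; simpl.
  - assert (i = 0%nat) by lia; subst; lra.
  - destruct (Nat.eq_dec i (S m)).
    + subst. pose proof (sum_nonneg f m (fun j Hj => H j ltac:(lia))). lra.
    + pose proof (IHm (fun j Hj => H j ltac:(lia)) ltac:(lia)). pose proof (H (S m) (le_n _)). lra.
Qed.

Lemma sum_sq_zero f m : sum_f_R0 (fun i => f i * f i) m = 0 -> forall i, (i <= m)%nat -> f i = 0.
Proof.
  intros H i Hi. pose proof (sum_term_le (fun i => f i * f i) m i ltac:(intros; nra) Hi). simpl in H0. nra.
Qed.

Lemma sum_abs_le f m : Rabs (sum_f_R0 f m) <= sum_f_R0 (fun i => Rabs (f i)) m.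
Proof. induction m; simpl. lra. pose proof (Rabs_triang (sum_f_R0 f m) (f (S m))). lra. Qed.

Lemma sum_le f g m : (forall i, (i <= m)%nat -> f i <= g i) -> sum_f_R0 f m <= sum_f_R0 g m.
Proof. induction m; simpl; intros H. apply H; lia. pose proof (H (S m) (le_n _)). pose proof (IHm (fun i Hi => H i ltac:(lia))). lra. Qed.


Definition comb (m : nat) (a : nat -> R) (F : nat -> vec) : vec := fun k => sum_f_R0 (fun i => a i * F i k) m.
Definition orth (n m : nat) (F : nat -> vec) : Prop := forall i j, (i <= m)%nat -> (j <= m)%nat -> dot n (F i) (F j) = kd i j.
Definition eqv (n : nat) (u v : vec) := forall k, (k <= n)%nat -> u k = v k.
Definition inspan n m F v := exists a, eqv n v (comb m a F).
Definition sq m a := sum_f_R0 (fun i => a i * a i) m.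
Definition cdot m (a b : nat -> R) := sum_f_R0 (fun i => a i * b i) m.

Lemma sum_scal_r a f m : sum_f_R0 (fun i => f i * a) m = sum_f_R0 f m * a.
Proof. induction m; simpl; [ring| rewrite IHm; ring]. Qed.

Lemma dot_sym n u v : dot n u v = dot n v u.
Proof. unfold dot; apply sum_eq; intros; ring. Qed.
Lemma dot_eqv n u u' v v' : eqv n u u' -> eqv n v v' -> dot n u v = dot n u' v'.
Proof. intros H1 H2; unfold dot; apply sum_eq; intros. rewrite H1, H2 by auto; ring. Qed.

Lemma dot_comb_r n v m a F : dot n v (comb m a F) = sum_f_R0 (fun i => a i * dot n v (F i)) m.
Proof.
  unfold dot, comb.
  transitivity (sum_f_R0 (fun k => sum_f_R0 (fun i => a i * (v k * F i k)) m) n).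
  - apply sum_eq; intros. rewrite <- sum_scal_l. apply sum_eq; intros; ring.
  - rewrite sum_swap. apply sum_eq; intros. rewrite sum_scal_l. reflexivity.
Qed.

Lemma dot_comb_orth n m a b F : orth n m F -> dot n (comb m a F) (comb m b F) = cdot m a b.
Proof.
  intro HF. rewrite dot_comb_r. unfold cdot. apply sum_eq; intros j Hj.
  rewrite dot_sym, dot_comb_r.
  rewrite (sum_eq _ (fun i => kd j i * a i)).
  - rewrite kron_l by auto. ring.
  - intros i Hi. rewrite HF by auto. ring.
Qed.

Lemma comb_comb m M a B f k :
  comb m a (fun j => comb M (B j) f) k = comb M (fun i => sum_f_R0 (fun j => a j * B j i) m) f k.
Proof.
  unfold comb.
  transitivity (sum_f_R0 (fun j => sum_f_R0 (fun i => a j * B j i * f i k) M) m).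
  - apply sum_eq; intros. rewrite <- sum_scal_l. apply sum_eq; intros; ring.
  - rewrite sum_swap. apply sum_eq; intros. rewrite sum_scal_r. reflexivity.
Qed.

Lemma Rabs_of_sq x y : x * x <= y * y -> 0 <= y -> Rabs x <= y.
Proof. intros. unfold Rabs; destruct (Rcase_abs x); nra. Qed.


Definition hs (u : nat -> R) := 1 - u 0%nat.
Definition hw (u : nat -> R) i := u i - kd 0 i.
Definition HH (u : nat -> R) i j := kd i j - hw u i * hw u j / hs u.

Lemma sq_hw M u : sq M u = 1 -> sq M (hw u) = 2 * hs u.
Proof.
  intro Hu. unfold sq, hw, hs.
  rewrite (sum_eq _ (fun i => (u i * u i + (-2) * (kd 0 i * u i)) + kd 0 i * kd 0 i)).
  - rewrite !sum_plus, sum_scal_l, !kron_l by lia. unfold sq in Hu. rewrite Hu, kd_eq. ring.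
  - intros; ring.
Qed.

Lemma hw_zero M u : sq M u = 1 -> hs u = 0 -> forall i, (i <= M)%nat -> hw u i = 0.
Proof. intros Hu Hs. apply sum_sq_zero. fold (sq M (hw u)). rewrite sq_hw by auto. rewrite Hs; ring. Qed.

Lemma HH_col0 M u i : sq M u = 1 -> (i <= M)%nat -> HH u i 0 = u i.
Proof.
  intros Hu Hi. unfold HH.
  destruct (Req_EM_T (hs u) 0) as [Hs|Hs].
  - pose proof (hw_zero M u Hu Hs i Hi) as Hw. rewrite Hw. unfold hw in Hw. rewrite kd_sym in Hw. lra.
  - replace (hw u 0%nat) with (- hs u) by (unfold hw, hs; rewrite kd_eq; ring).
    unfold hw. rewrite (kd_sym 0 i). field. auto.
Qed.

Lemma HH_sym u i j : HH u i j = HH u j i.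
Proof. unfold HH. rewrite kd_sym. unfold Rdiv. ring. Qed.

Lemma HH_orth M u i j : sq M u = 1 -> (i <= M)%nat -> (j <= M)%nat ->
  sum_f_R0 (fun k => HH u i k * HH u k j) M = kd i j.
Proof.
  intros Hu Hi Hj. unfold HH.
  destruct (Req_EM_T (hs u) 0) as [Hs|Hs].
  - rewrite (sum_eq _ (fun k => kd i k * kd k j)).
    + apply kron_l with (f := fun k => kd k j); auto.
    + intros k Hk. rewrite (hw_zero M u Hu Hs k Hk). unfold Rdiv; ring.
  - set (s := hs u). set (w := hw u).
    rewrite (sum_eq _ (fun k => ((kd i k * kd k j + (-(w j)/s) * (kd i k * w k)) + (-(w i)/s) * (kd j k * w k)) + (w i * w j/(s*s)) * (w k * w k))).
    + rewrite !sum_plus, !sum_scal_l.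
      rewrite kron_l with (f := fun k => kd k j) by auto.
      rewrite !kron_l by auto.
      fold (sq M w). unfold w, s. rewrite sq_hw by auto. field. auto.
    + intros k Hk. rewrite (kd_sym k j). field. auto.
Qed.


Fixpoint tv (k : nat) : Compactness.Tn k R -> vec :=
  match k with
  | 0%nat => fun _ _ => 0
  | S k' => fun x i => match i with 0%nat => fst x | S i' => tv k' (snd x) i' end
  end.
Fixpoint vt (k : nat) (a : vec) : Compactness.Tn k R :=
  match k with 0%nat => tt | S k' => (a 0%nat, vt k' (fun i => a (S i))) end.

Lemma tv_vt k : forall a i, (i < k)%nat -> tv k (vt k a) i = a i.
Proof.
  induction k; intros a i Hi. lia. destruct i; simpl. auto. rewrite IHk by lia. auto.
Qed.

Lemma bounded_vt k : forall a, (forall i, (i < k)%nat -> -1 <= a i <= 1) ->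
  Compactness.bounded_n k (vt k (fun _ => -1)) (vt k (fun _ => 1)) (vt k a).
Proof.
  induction k; intros a H; simpl. auto. split. apply H; lia. apply IHk. intros; apply H; lia.
Qed.

Lemma close_tv k : forall d x t, Compactness.close_n k d x t -> forall i, (i < k)%nat -> Rabs (tv k x i - tv k t i) < d.
Proof.
  induction k; intros d x t H i Hi. lia.
  destruct x as [x1 x2], t as [t1 t2]. simpl in H. destruct H as [H1 H2].
  destruct i; simpl. auto. apply IHk; auto; lia.
Qed.

Definition nz K (v : vec) : vec := fun i => v i / sqrt (sq K v).

Lemma sq_nz K v : 0 < sq K v -> sq K (nz K v) = 1.
Proof.
  intro H. unfold nz. unfold sq at 1.
  rewrite (sum_eq _ (fun i => (v i * v i) * / (sqrt (sq K v) * sqrt (sq K v)))).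
  - rewrite sum_scal_r. rewrite sqrt_sqrt by lra. fold (sq K v). field. lra.
  - intros. field. apply Rgt_not_eq. apply sqrt_lt_R0. auto.
Qed.

Lemma cdot_nz K v z : cdot K (nz K v) z = cdot K v z / sqrt (sq K v).
Proof. unfold cdot, nz, Rdiv. rewrite <- sum_scal_r. apply sum_eq; intros; ring. Qed.


Definition dprime K (dl : vec -> R) (t : Compactness.Tn (S K) R) : R :=
  let u := nz K (tv (S K) t) in if Rlt_dec 0 (dl u) then dl u else 1.

Lemma dprime_pos K dl t : 0 < dprime K dl t.
Proof. unfold dprime. destruct (Rlt_dec _ _); lra. Qed.

Lemma gauge_pos K dl t : 0 < Rmin (1/4) (dprime K dl t / 2) / INR (S K).
Proof.
  pose proof (dprime_pos K dl t). apply Rdiv_lt_0_compat.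
  apply Rmin_glb_lt; lra. apply lt_0_INR; lia.
Qed.

Definition gauge K dl t : posreal := mkposreal _ (gauge_pos K dl t).

Lemma sq_bound K z i : sq K z = 1 -> (i <= K)%nat -> -1 <= z i <= 1.
Proof.
  intros H Hi. pose proof (sum_term_le (fun i => z i * z i) K i ltac:(intros; nra) Hi).
  unfold sq in H. simpl in H0. nra.
Qed.

Lemma cover K (dl : vec -> R) : (forall u, sq K u = 1 -> 0 < dl u) ->
  exists P : list vec, forall z, sq K z = 1 ->
    exists u, In u P /\ sq K u = 1 /\ 1 <= (1 + dl u * dl u) * (cdot K u z * cdot K u z).
Proof.
  intro Hdl.
  assert (HL := Compactness.compactness_list (S K) (vt (S K) (fun _ => -1)) (vt (S K) (fun _ => 1)) (gauge K dl)).
  apply NNPP in HL. destruct HL as [l Hl].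
  exists (map (fun t => nz K (tv (S K) t)) l).
  intros z Hz.
  destruct (Hl (vt (S K) z)) as [t [Ht [_ Hc]]].
  { apply bounded_vt. intros; apply (sq_bound K); auto; lia. }
  set (T := tv (S K) t).
  set (d := pos (gauge K dl t)).
  set (e := fun i => z i - T i).
  assert (He : forall i, (i <= K)%nat -> Rabs (e i) < d).
  { intros i Hi. pose proof (close_tv (S K) _ _ _ Hc i ltac:(lia)). rewrite tv_vt in H by lia. exact H. }
  set (eps := Rmin (1/4) (dprime K dl t / 2)).
  assert (Hd : d * INR (S K) = eps).
  { unfold d, eps, gauge. cbn [pos]. field. apply not_0_INR; lia. }
  assert (HK : 1 <= INR (S K)). { rewrite S_INR. pose proof (pos_INR K). lra. }
  assert (Hd0 : 0 < d) by (unfold d; apply cond_pos).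
  set (p := cdot K e z).
  assert (Hp : Rabs p <= eps).
  { unfold p, cdot. eapply Rle_trans. apply sum_abs_le.
    eapply Rle_trans with (sum_f_R0 (fun _ => d) K).
    - apply sum_le. intros i Hi. rewrite Rabs_mult. pose proof (He i Hi). pose proof (sq_bound K z i Hz Hi).
      pose proof (Rabs_pos (e i)). assert (Rabs (z i) <= 1) by (apply Rabs_le; lra). nra.
    - rewrite sum_cte. lra. }
  assert (Hse : sq K e <= eps * eps).
  { unfold sq. eapply Rle_trans with (sum_f_R0 (fun _ => d * d) K).
    - apply sum_le. intros i Hi. pose proof (He i Hi). revert H. unfold Rabs. destruct (Rcase_abs (e i)); intros; nra.
    - rewrite sum_cte. rewrite <- Hd. nra. }
  assert (HsT : sq K T = 1 - 2 * p + sq K e).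
  { unfold sq, p, cdot. rewrite (sum_eq _ (fun i => (z i * z i + (-2) * (e i * z i)) + e i * e i)).
    - rewrite !sum_plus, sum_scal_l. fold (sq K z). rewrite Hz. ring.
    - intros. unfold e. ring. }
  assert (HcT : cdot K T z = 1 - p).
  { unfold p, cdot. rewrite (sum_eq _ (fun i => z i * z i + (-1) * (e i * z i))).
    - rewrite !sum_plus, sum_scal_l. fold (sq K z). rewrite Hz. ring.
    - intros. unfold e. ring. }
  assert (He1 : eps <= 1/4) by apply Rmin_l.
  assert (He2 : eps <= dprime K dl t / 2) by apply Rmin_r.
  assert (He3 : 0 <= eps) by (rewrite <- Hd; nra).
  assert (Hp2 : -eps <= p <= eps) by (revert Hp; unfold Rabs; destruct (Rcase_abs p); intros; lra).
  assert (HT0 : 0 < sq K T) by (pose proof (sum_nonneg (fun i => e i * e i) K ltac:(intros; nra)); fold (sq K e) in H; lra).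
  set (u := nz K T).
  assert (Hu : sq K u = 1) by (apply sq_nz; auto).
  assert (Hdu : 0 < dl u) by auto.
  assert (Hdp : dprime K dl t = dl u).
  { unfold dprime. fold T. fold u. destruct (Rlt_dec 0 (dl u)); [auto|contradiction]. }
  exists u. split; [|split; auto].
  { apply in_map_iff. exists t; auto. }
  unfold u. rewrite cdot_nz, HcT. fold u.
  set (r := sqrt (sq K T)).
  assert (Hr : r * r = sq K T) by (apply sqrt_sqrt; lra).
  assert (Hr0 : 0 < r) by (apply sqrt_lt_R0; auto).
  assert (Hmain : sq K T <= (1 + dl u * dl u) * ((1 - p) * (1 - p))).
  { rewrite HsT. rewrite Hdp in He2.
    assert (eps * eps <= dl u * dl u * ((1 - p) * (1 - p))) by nra. nra. }
  replace ((1 - p) / r * ((1 - p) / r)) with (((1 - p) * (1 - p)) / (r * r)) by (field; lra).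
  rewrite Hr. unfold Rdiv. rewrite <- Rmult_assoc.
  apply (Rmult_le_reg_r (sq K T)); auto. rewrite Rmult_assoc, Rinv_l by lra. lra.
Qed.


Definition A_gen n m (b : nat -> vec) (e : R) (x : vec) : Prop :=
  exists c : nat -> R, Rabs (c 0%nat) <= 1 /\
    (forall i, (i < m)%nat -> Rabs (c (S i)) <= e * Rabs (c i)) /\
    (forall k, (k <= n)%nat -> x k = comb m c b k).

Definition Gstmt n m := forall f, orth n m f -> forall eps : (nat -> vec) -> R,
  (forall b, orth n m b -> (forall i, (i <= m)%nat -> inspan n m f (b i)) -> 0 < eps b) ->
  exists L, (forall b, In b L -> orth n m b /\ forall i, (i <= m)%nat -> inspan n m f (b i)) /\
    forall a, sq m a <= 1 -> exists b, In b L /\ A_gen n m b (eps b) (comb m a f).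

Lemma G0 n : Gstmt n 0.
Proof.
  intros f Hf eps Heps. exists (f :: nil). split.
  - intros b [<-|[]]. split; auto. intros i Hi. assert (i = 0%nat) by lia; subst.
    exists (kd 0). intros k Hk. unfold comb; simpl. rewrite kd_eq; ring.
  - intros a Ha. exists f. split; [left; auto|]. exists a. split; [|split].
    + apply Rabs_of_sq; [|lra]. unfold sq in Ha; simpl in Ha. lra.
    + intros; lia.
    + auto.
Qed.

Definition gb (f : nat -> vec) M u j := comb M (fun i => HH u i j) f.
Definition vcons (v : vec) (h : nat -> vec) : nat -> vec := fun i => match i with 0%nat => v | S j => h j end.
Definition rcons (t : R) (c : nat -> R) : nat -> R := fun i => match i with 0%nat => t | S j => c j end.
Definition ha M u (a : nat -> R) j := sum_f_R0 (fun i => HH u i j * a i) M.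

Lemma g_orth n M f u : orth n M f -> sq M u = 1 -> orth n M (gb f M u).
Proof.
  intros Hf Hu j l Hj Hl. unfold gb. rewrite dot_comb_orth by auto. unfold cdot.
  rewrite <- (HH_orth M u j l) by auto. apply sum_eq; intros. rewrite HH_sym. auto.
Qed.

Lemma comb_split m c b k : comb (S m) c b k = c 0%nat * b 0%nat k + comb m (fun j => c (S j)) (fun j => b (S j)) k.
Proof. unfold comb. rewrite decomp_sum by lia. simpl pred. auto. Qed.

Lemma sq_split m c : sq (S m) c = c 0%nat * c 0%nat + sq m (fun j => c (S j)).
Proof. unfold sq. rewrite decomp_sum by lia. simpl pred. auto. Qed.

Lemma span_transfer n m f u v : inspan n m (fun j => gb f (S m) u (S j)) v -> inspan n (S m) f v.
Proof.
  intros [a Ha]. eexists. intros k Hk. rewrite Ha by auto. unfold gb. apply comb_comb.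
Qed.

Lemma vcons_ok n m f u h : orth n (S m) f -> sq (S m) u = 1 -> orth n m h ->
  (forall i, (i <= m)%nat -> inspan n m (fun j => gb f (S m) u (S j)) (h i)) ->
  orth n (S m) (vcons (gb f (S m) u 0) h) /\
  (forall i, (i <= S m)%nat -> inspan n (S m) f (vcons (gb f (S m) u 0) h i)).
Proof.
  intros Hf Hu Hh Hs. pose proof (g_orth n (S m) f u Hf Hu) as Hg.
  assert (H0 : forall j, (j <= m)%nat -> dot n (gb f (S m) u 0) (h j) = 0).
  { intros j Hj. destruct (Hs j Hj) as [a Ha].
    rewrite (dot_eqv n _ (gb f (S m) u 0) _ _ (fun k _ => eq_refl) Ha).
    rewrite dot_comb_r. apply sum_zero. intros i Hi. rewrite Hg by lia. rewrite kd_neq by lia. ring. }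
  split.
  - intros i j Hi Hj. destruct i, j; simpl.
    + apply Hg; lia.
    + rewrite H0 by lia. rewrite kd_neq by lia. auto.
    + rewrite dot_sym, H0 by lia. rewrite kd_neq by lia. auto.
    + rewrite Hh by lia. unfold kd. simpl. auto.
  - intros i Hi. destruct i; simpl.
    + eexists. intros k Hk. unfold gb. reflexivity.
    + eapply span_transfer. apply Hs. lia.
Qed.

Lemma ha_repr M f u a k : sq M u = 1 -> comb M (ha M u a) (gb f M u) k = comb M a f k.
Proof.
  intro Hu. unfold gb. rewrite comb_comb. unfold comb. apply sum_eq. intros i Hi. f_equal.
  unfold ha.
  transitivity (sum_f_R0 (fun j => sum_f_R0 (fun l => (HH u i j * HH u j l) * a l) M) M).
  - apply sum_eq; intros j Hj. rewrite <- sum_scal_r. apply sum_eq; intros l Hl. rewrite (HH_sym u l j). ring.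
  - rewrite sum_swap. rewrite (sum_eq _ (fun l => kd i l * a l)).
    + apply kron_l; auto.
    + intros l Hl. rewrite sum_scal_r. rewrite HH_orth; auto.
Qed.

Lemma ha0 M u a : sq M u = 1 -> ha M u a 0 = cdot M u a.
Proof. intro Hu. unfold ha, cdot. apply sum_eq; intros. rewrite HH_col0 with (M := M); auto. Qed.

Lemma fold_min_pos (l : list R) : (forall x, In x l -> 0 < x) -> 0 < fold_right Rmin 1 l.
Proof.
  induction l; simpl; intros H. lra. apply Rmin_glb_lt. apply H; auto. apply IHl; auto.
Qed.
Lemma fold_min_le (l : list R) x : In x l -> fold_right Rmin 1 l <= x.
Proof.
  induction l; simpl; intros H. destruct H. destruct H as [<-|H]. apply Rmin_l.
  eapply Rle_trans. apply Rmin_r. auto.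
Qed.

Lemma cdot_sym m a b : cdot m a b = cdot m b a.
Proof. unfold cdot. apply sum_eq; intros; ring. Qed.


Lemma Gstep n m : Gstmt n m -> Gstmt n (S m).
Proof.
  intros IH f Hf eps Heps.
  set (M := S m).
  set (g' := fun u j => gb f M u (S j)).
  set (eps' := fun u h => eps (vcons (gb f M u 0) h)).
  assert (Hch : forall u, exists L : list (nat -> vec),
    (sq M u = 1 -> (forall h, In h L -> orth n m h /\ forall i, (i <= m)%nat -> inspan n m (g' u) (h i)) /\
       forall a, sq m a <= 1 -> exists h, In h L /\ A_gen n m h (eps' u h) (comb m a (g' u))) /\
    (sq M u <> 1 -> L = nil)).
  { intro u. destruct (classic (sq M u = 1)) as [Hu|Hu].
    - assert (Hg' : orth n m (g' u)).
      { intros i j Hi Hj. unfold g'. rewrite (g_orth n M f u Hf Hu) by (unfold M; lia). unfold kd; simpl; auto. }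
      destruct (IH (g' u) Hg' (eps' u)) as [L HL].
      { intros h Hh Hs. unfold eps'. destruct (vcons_ok n m f u h Hf Hu Hh Hs). apply Heps; auto. }
      exists L. split; [auto|contradiction].
    - exists nil. split; [contradiction|auto]. }
  set (Lf := fun u => proj1_sig (constructive_indefinite_description _ (Hch u))).
  assert (HLf : forall u, (sq M u = 1 -> (forall h, In h (Lf u) -> orth n m h /\ forall i, (i <= m)%nat -> inspan n m (g' u) (h i)) /\
       forall a, sq m a <= 1 -> exists h, In h (Lf u) /\ A_gen n m h (eps' u h) (comb m a (g' u))) /\
    (sq M u <> 1 -> Lf u = nil)).
  { intro u. exact (proj2_sig (constructive_indefinite_description _ (Hch u))). }
  clearbody Lf. clear Hch.
  set (dl := fun u => fold_right Rmin 1 (map (eps' u) (Lf u))).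
  assert (Hdl : forall u, sq M u = 1 -> 0 < dl u).
  { intros u Hu. apply fold_min_pos. intros x Hx. apply in_map_iff in Hx. destruct Hx as [h [<- Hh]].
    destruct (HLf u) as [[H1 _] _]. auto. destruct (H1 h Hh) as [Ho Hs].
    destruct (vcons_ok n m f u h Hf Hu Ho Hs). apply Heps; auto. }
  destruct (cover M dl Hdl) as [P HP].
  exists (flat_map (fun u => map (vcons (gb f M u 0)) (Lf u)) P). split.
  - intros b Hb. apply in_flat_map in Hb. destruct Hb as [u [Hu Hb]]. apply in_map_iff in Hb.
    destruct Hb as [h [<- Hh]].
    destruct (classic (sq M u = 1)) as [Hu1|Hu1].
    + destruct (HLf u) as [[H1 _] _]. auto. destruct (H1 h Hh) as [Ho Hs].
      apply vcons_ok; auto.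
    + destruct (HLf u) as [_ H2]. rewrite H2 in Hh by auto. destruct Hh.
  - intros a Ha.
    assert (Hex : exists u, In u P /\ sq M u = 1 /\ sq M a <= (1 + dl u * dl u) * (cdot M u a * cdot M u a)).
    { destruct (Req_EM_T (sq M a) 0) as [Ha0|Ha0].
      - destruct (HP (kd 0)) as [u [Hu [Hu1 _]]].
        { unfold sq. rewrite (kron_l (kd 0)) by lia. apply kd_eq. }
        exists u; repeat split; auto. rewrite Ha0. pose proof (Hdl u Hu1). nra.
      - assert (Hpos : 0 < sq M a).
        { pose proof (sum_nonneg (fun i => a i * a i) M ltac:(intros; nra)). fold (sq M a) in H. lra. }
        destruct (HP (nz M a) (sq_nz M a Hpos)) as [u [Hu [Hu1 Hin]]].
        exists u; repeat split; auto.
        rewrite cdot_sym, cdot_nz in Hin. rewrite cdot_sym.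
        set (r := sqrt (sq M a)) in *. set (c := cdot M a u) in *.
        assert (Hr : r * r = sq M a) by (apply sqrt_sqrt; lra).
        assert (Hr0 : 0 < r) by (apply sqrt_lt_R0; auto).
        assert (E : c / r * (c / r) * (r * r) = c * c) by (field; lra).
        rewrite <- Hr, <- E. assert (0 < r * r) by nra. nra. }
    destruct Hex as [u [Hu [Hu1 Hau]]].
    destruct (HLf u) as [HA _]. destruct (HA Hu1) as [H1 H2]. clear HA.
    assert (Hg' : orth n m (g' u)).
    { intros i j Hi Hj. unfold g'. rewrite (g_orth n M f u Hf Hu1) by (unfold M; lia). unfold kd; simpl; auto. }
    set (b0 := ha M u a). set (a' := fun j => b0 (S j)). set (t := cdot M u a) in *.
    assert (Hb00 : b0 0%nat = t) by (apply ha0; auto).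
    assert (Hx : forall k, comb M a f k = t * gb f M u 0 k + comb m a' (g' u) k).
    { intro k. rewrite <- (ha_repr M f u a k Hu1). fold b0. unfold M. rewrite comb_split. rewrite Hb00. reflexivity. }
    assert (Hsq : sq M a = sq M b0).
    { assert (E1 : sq M a = dot n (comb M a f) (comb M a f)) by (rewrite dot_comb_orth; auto).
      assert (E2 : sq M b0 = dot n (comb M b0 (gb f M u)) (comb M b0 (gb f M u))) by (rewrite dot_comb_orth; auto; apply g_orth; auto).
      rewrite E1, E2. apply dot_eqv; intros k Hk; unfold b0; rewrite ha_repr; auto. }
    assert (Hsq2 : sq M b0 = t * t + sq m a') by (unfold M; rewrite sq_split, Hb00; reflexivity).
    assert (Ha'0 : 0 <= sq m a') by (apply sum_nonneg; intros; nra).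
    destruct (H2 a' ltac:(nra)) as [h [Hh [c' [Hc0 [Hch Hck]]]]].
    destruct (H1 h Hh) as [Ho Hs].
    exists (vcons (gb f M u 0) h). split.
    + apply in_flat_map. exists u. split; auto. apply in_map; auto.
    + exists (rcons t c'). split; [|split].
      * simpl. apply Rabs_of_sq; lra.
      * intros i Hi. destruct i.
        -- simpl. fold (eps' u h).
           assert (Hsc : sq m c' = sq m a').
           { change (cdot m c' c' = cdot m a' a'). rewrite <- (dot_comb_orth n m c' c' h Ho), <- (dot_comb_orth n m a' a' (g' u) Hg').
             apply dot_eqv; intros k Hk; rewrite Hck; auto. }
           assert (Hc0sq : c' 0%nat * c' 0%nat <= sq m c') by (apply (sum_term_le (fun i => c' i * c' i)); intros; try nra; lia).
           assert (Hle : dl u <= eps' u h) by (apply fold_min_le; apply in_map; auto).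
           pose proof (Hdl u Hu1).
           assert (Htt : Rabs t * Rabs t = t * t) by (unfold Rabs; destruct (Rcase_abs t); ring).
           pose proof (Rabs_pos t).
           apply Rabs_of_sq; [|nra].
           assert (dl u * dl u * (t * t) <= eps' u h * eps' u h * (t * t)).
           { apply Rmult_le_compat_r. nra. nra. }
           nra.
        -- simpl. apply Hch. lia.
      * intros k Hk. rewrite Hx. unfold M. rewrite comb_split. rewrite Hck by auto. reflexivity.
Qed.


Theorem lemma2p4 (n : nat) (hn : (1 <= n)%nat) (eps : (nat -> vec) -> R)
  (heps : forall b : nat -> vec, orthonormal n b -> 0 < eps b) :
  exists L : list (nat -> vec),
    (forall b, In b L -> orthonormal n b) /\
    (forall x : vec, norm n x <= 1 ->
       exists b, In b L /\ A_set n b (eps b) x).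
Proof.
  assert (Gall : forall m, Gstmt n m) by (induction m; [apply G0 | apply Gstep; auto]).
  set (e := fun i : nat => fun k : nat => kd i k).
  assert (He : orth n n e).
  { intros i j Hi Hj. unfold dot, e. rewrite (kron_l (kd j)) by auto. apply kd_sym. }
  destruct (Gall n e He eps) as [L [HL1 HL2]].
  { intros b Hb _. apply heps. exact Hb. }
  exists L. split.
  - intros b Hb. exact (proj1 (HL1 b Hb)).
  - intros x Hx.
    assert (Hsq : sq n x <= 1).
    { assert (0 <= dot n x x) by (apply sum_nonneg; intros; nra).
      unfold norm in Hx. change (sq n x) with (dot n x x).
      rewrite <- (sqrt_sqrt (dot n x x)) by auto. pose proof (sqrt_pos (dot n x x)). nra. }
    destruct (HL2 x Hsq) as [b [Hb [c [Hc0 [Hc1 Hc2]]]]].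
    exists b. split; auto. exists c. split; [auto|split; auto].
    intros k Hk. change (x k = comb n c b k). rewrite <- Hc2 by auto. unfold comb, e. symmetry. apply kron_r. auto.
Qed.
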